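(* Let $1\le k\le n$ and $1\le m<n$ be integers. Let $\mathcal{C}=\{d_1,\dots,d_n\}$ be a corpus of $n$ items of which exactly $m$ are useful (set $\mathcal{C}^+$) and $n-m$ non-useful (set $\mathcal{C}^-$). Define $\mathrm{MU}(i)=\mathbb{1}[i\le k]$. Let $\pi$ be any probability distribution over the set $S_n$ of rankings (permutations) of $\mathcal{C}$, with expected exposure vector $\epsilon_d=\sum_{\sigma\in S_n}\pi(\sigma)\,\mathrm{MU}(\bar\sigma_d)$, where $\bar\sigma_d$ is the rank of $d$ in $\sigma$. Define the target exposure vector $\epsilon^*$ by: for $d\in\mathcal{C}^+$, $\epsilon^*_d=1$ if $m\le k$ and $k/m$ if $m>k$; for $d\in\mathcal{C}^-$, $\epsilon^*_d=\frac{k-m}{n-m}$ if $m\le k$ and $0$ if $m>k$. Then: if $m\le k$, $\langle\epsilon,\epsilon^*\rangle\in\big[0,\ m+\frac{(k-m)^2}{n-m}\big]$; if $m>k$, $\langle\epsilon,\epsilon^*\rangle\in\big[0,\ \frac{k^2}{m}\big]$.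
   Context: $\langle\epsilon,\epsilon^*\rangle$ is the expected exposure relevance (EE-R) of the stochastic ranking policy $\pi$ under a top-$k$ truncation machine-user browsing model; $\epsilon^*$ is the exposure of an oracle retriever ranking all useful items above all non-useful ones uniformly at random within each group. *)

(* Defs.v *)
From mathcomp Require Import all_boot all_order all_algebra.
From mathcomp Require Import perm.
Set Implicit Arguments. Unset Strict Implicit. Unset Printing Implicit Defensive.
Import Order.TTheory GRing.Theory Num.Theory.
Local Open Scope ring_scope.

(* Corpus items are 'I_n; a ranking is a permutation sigma : {perm 'I_n},
   where sigma d is the (0-based) rank of item d, i.e. bar-sigma_d = sigma d + 1. *)

Definition MU (R : numDomainType) (k i : nat) : R := (i <= k)%N%:R.

Definition rank_of n (sigma : {perm 'I_n}) (d : 'I_n) : nat := (sigma d).+1.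

Definition is_distr (R : numDomainType) n (pi : {ffun {perm 'I_n} -> R}) : Prop :=
  (forall s, 0 <= pi s) /\ \sum_s pi s = 1.

Definition exposure (R : numDomainType) n k (pi : {ffun {perm 'I_n} -> R}) (d : 'I_n) : R :=
  \sum_(s : {perm 'I_n}) pi s * MU R k (rank_of s d).

Definition target_exposure (R : numFieldType) (n k : nat) (U : {set 'I_n}) (d : 'I_n) : R :=
  let m := #|U| in
  if d \in U then (if (m <= k)%N then 1 else k%:R / m%:R)
  else (if (m <= k)%N then (k%:R - m%:R) / (n%:R - m%:R) else 0).

Definition EER (R : numFieldType) n k (pi : {ffun {perm 'I_n} -> R}) (U : {set 'I_n}) : R :=
  \sum_(d : 'I_n) exposure k pi d * target_exposure R k U d.

(* Main.v *)
Require Import Defs.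
From mathcomp Require Import all_boot all_order all_algebra.
From mathcomp Require Import perm.
From mathcomp Require Import lra.
Import Order.TTheory GRing.Theory Num.Theory.
Local Open Scope ring_scope.

Lemma sumx (R : numDomainType) n k (s : {perm 'I_n}) : (k <= n)%N ->
  \sum_d MU R k (rank_of s d) = k%:R.
Proof.
move=> kn; rewrite (reindex_inj (@perm_inj _ s^-1)) /=.
under eq_bigr do rewrite /MU /rank_of permKV.
rewrite -natr_sum; congr (_%:R).
rewrite -(big_mkord xpredT (fun i => nat_of_bool (i < k)%N)) (big_cat_nat (leq0n k) kn) /=.
rewrite big_nat_cond (eq_bigr (fun _ => 1%N)); last by move=> i /andP[/andP[_ ->]].
rewrite -big_nat_cond sum_nat_const_nat subn0 muln1.
rewrite big_nat_cond big1 ?addn0 //.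
by move=> i /andP[/andP[ki _] _]; rewrite ltnNge ki.
Qed.

Lemma x01 (R : numDomainType) n k (s : {perm 'I_n}) d :
  0 <= MU R k (rank_of s d) <= 1.
Proof. by rewrite /MU; case: (_ <= _)%N => /=; rewrite ?lexx ?ler01. Qed.

Lemma EER_swap (R : numFieldType) n k (pi : {ffun {perm 'I_n} -> R}) U :
  EER k pi U = \sum_s pi s * \sum_d MU R k (rank_of s d) * target_exposure R k U d.
Proof.
rewrite /EER /exposure.
under eq_bigr do rewrite mulr_suml.
rewrite exchange_big /=; apply: eq_bigr => s _; rewrite mulr_sumr.
by apply: eq_bigr => d _; rewrite mulrA.
Qed.

Lemma avg_bound (R : realFieldType) n (pi : {ffun {perm 'I_n} -> R}) (F : {perm 'I_n} -> R) B :
  is_distr pi -> (forall s, 0 <= F s <= B) ->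
  0 <= \sum_s pi s * F s /\ \sum_s pi s * F s <= B.
Proof.
move=> [p0 p1] hF; split.
  by apply: sumr_ge0 => s _; case/andP: (hF s) => h _; rewrite mulr_ge0.
apply: le_trans (_ : \sum_s pi s * B <= B).
  by apply: ler_sum => s _; case/andP: (hF s) => _ h; rewrite ler_wpM2l.
by rewrite -mulr_suml p1 mul1r.
Qed.

Theorem corollary2 (R : realFieldType) (n k m : nat) (U : {set 'I_n})
    (pi : {ffun {perm 'I_n} -> R}) :
  (1 <= k)%N -> (k <= n)%N -> (1 <= m)%N -> (m < n)%N -> #|U| = m ->
  is_distr pi ->
  ((m <= k)%N ->
     0 <= EER k pi U /\ EER k pi U <= m%:R + (k%:R - m%:R) ^+ 2 / (n%:R - m%:R)) /\
  ((k < m)%N ->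
     0 <= EER k pi U /\ EER k pi U <= k%:R ^+ 2 / m%:R).
Proof.
move=> k1 kn m1 mn Um hpi; rewrite EER_swap.
have key : forall s, let S := \sum_(d in U) MU R k (rank_of s d) in
    let T := \sum_(d | d \notin U) MU R k (rank_of s d) in
    [/\ 0 <= S, 0 <= T, S + T = k%:R, S <= m%:R &
      \sum_d MU R k (rank_of s d) * target_exposure R k U d =
      S * (if (m <= k)%N then 1 else k%:R / m%:R) +
      T * (if (m <= k)%N then (k%:R - m%:R) / (n%:R - m%:R) else 0)].
  move=> s S T; split.
  - by apply: sumr_ge0 => d _; case/andP: (x01 R n k s d).
  - by apply: sumr_ge0 => d _; case/andP: (x01 R n k s d).
  - by rewrite /S /T -(@sumx R n k s kn) [RHS](bigID (fun d => d \in U)).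
  - rewrite -Um -sum1_card natr_sum; apply: ler_sum => d _.
    by case/andP: (x01 R n k s d).
  - rewrite (bigID (fun d => d \in U)) /= /S /T !mulr_suml.
    by congr (_ + _); apply: eq_bigr => d dU; rewrite /target_exposure Um ?dU ?(negbTE dU).
have mn' : (0 : R) < n%:R - m%:R by rewrite subr_gt0 ltr_nat.
split=> hmk.
  apply: avg_bound => // s.
  have [S0 T0 ST Sm ->] := key s; rewrite hmk.
  set c := (k%:R - m%:R) / (n%:R - m%:R).
  have c0 : 0 <= c by apply: divr_ge0; [rewrite subr_ge0 ler_nat | exact: ltW].
  have c1 : c <= 1 by rewrite ler_pdivrMr // mul1r lerB ?ler_nat.
  have -> : (k%:R - m%:R) ^+ 2 / (n%:R - m%:R) = (k%:R - m%:R) * c by rewrite /c expr2 mulrA.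
  have km : (m%:R : R) <= k%:R by rewrite ler_nat.
  apply/andP; split; first nra.
  nra.
apply: avg_bound => // s.
have [S0 T0 ST Sm ->] := key s; rewrite leqNgt hmk /=.
have m0 : (0 : R) < m%:R by rewrite ltr0n.
have -> : (k%:R : R) ^+ 2 / m%:R = k%:R * (k%:R / m%:R) by rewrite expr2 mulrA.
have q0 : (0 : R) <= k%:R / m%:R by rewrite divr_ge0.
rewrite mulr0 addr0; apply/andP; split; first nra.
nra.
Qed.
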